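(* Let $\xi=e^{i\pi/5}$, $\tau=\frac{1+\sqrt5}{2}$, $\tau'=\frac{1-\sqrt5}{2}$, and for $n\in\mathbb{N}$ let $Q_2(n)=\{\sum_{j=0}^9 n_j\xi^j: n_j\in\mathbb{N}_0,\ \sum_j n_j\le n\}$. Let $M=\{(x_1+\tau x_2)+(x_3+\tau x_4)\xi^4: x_i\in\mathbb{Z}\}$ and define $*:M\to\mathbb{C}$ by $\big((x_1+\tau x_2)+(x_3+\tau x_4)\xi^4\big)^*=(x_1+\tau' x_2)+(x_3+\tau' x_4)\xi^8$. Let $D(n)$ be the closed convex hull of the regular decagon with vertices $n\xi^j$, $j=0,\dots,9$, and $\Sigma(D(n))=\{x\in M: x^*\in D(n)\}$. Then $Q_2(n)\subset\Sigma(D(n))\cap D(n)$.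
   Context: $M=\mathbb{Z}[\tau]\{\xi^j\}$ is the $\mathbb{Z}[\tau]$-span of the tenth roots of unity, and $\Sigma(D(n))$ is the two-dimensional cut-and-project quasicrystal with acceptance window $D(n)$. *)

(* Defs.v *)
From Stdlib Require Import Reals List ZArith.
From Coquelicot Require Import Coquelicot.
Import ListNotations.
Open Scope R_scope.

Fixpoint Cpow (z : C) (k : nat) : C :=
  match k with
  | O => RtoC 1
  | S k' => Cmult z (Cpow z k')
  end.

Definition xi : C := (cos (PI / 5), sin (PI / 5)).

Definition tau : R := (1 + sqrt 5) / 2.
Definition tau' : R := (1 - sqrt 5) / 2.

Definition Csum10 (f : nat -> C) : C :=
  fold_right Cplus (RtoC 0) (map f (seq 0 10)).
Definition nsum10 (f : nat -> nat) : nat :=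
  fold_right Nat.add 0%nat (map f (seq 0 10)).
Definition Rsum10 (f : nat -> R) : R :=
  fold_right Rplus 0 (map f (seq 0 10)).

Definition Mrep (x1 x2 x3 x4 : Z) : C :=
  Cplus (RtoC (IZR x1 + tau * IZR x2))
        (Cmult (RtoC (IZR x3 + tau * IZR x4)) (Cpow xi 4)).

Definition star_rep (x1 x2 x3 x4 : Z) : C :=
  Cplus (RtoC (IZR x1 + tau' * IZR x2))
        (Cmult (RtoC (IZR x3 + tau' * IZR x4)) (Cpow xi 8)).

Definition Mset (z : C) : Prop :=
  exists x1 x2 x3 x4 : Z, z = Mrep x1 x2 x3 x4.

Definition Q2set (n : nat) (z : C) : Prop :=
  exists nj : nat -> nat, (nsum10 nj <= n)%nat /\
    z = Csum10 (fun j => Cmult (RtoC (INR (nj j))) (Cpow xi j)).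

(* D(n) = convex hull of the ten points n xi^j (a compact polygon, hence
   equal to its closure) *)
Definition Dn (n : nat) (z : C) : Prop :=
  exists lam : nat -> R, (forall j, (j < 10)%nat -> 0 <= lam j) /\
    Rsum10 lam = 1 /\
    z = Csum10 (fun j => Cmult (RtoC (lam j)) (Cmult (RtoC (INR n)) (Cpow xi j))).

Definition SigmaSet (W : C -> Prop) (z : C) : Prop :=
  exists x1 x2 x3 x4 : Z, z = Mrep x1 x2 x3 x4 /\ W (star_rep x1 x2 x3 x4).

(* Main.v *)
Require Import Defs.
From Stdlib Require Import Reals Lra Nsatz Psatz Rtrigo_facts.
From Coquelicot Require Import Coquelicot.
Import Defs.
Open Scope R_scope.

Lemma sqrt5_sq : sqrt 5 * sqrt 5 = 5.
Proof. apply sqrt_sqrt; lra. Qed.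

Lemma tau_sq : tau * tau = tau + 1.
Proof. unfold tau. pose proof sqrt5_sq. nra. Qed.

Lemma cos_PI5 : cos (PI/5) = tau / 2.
Proof.
  set (x := PI/5).
  assert (Hc : 0 < cos x) by (apply cos_gt_0; unfold x; pose proof PI_RGT_0; lra).
  assert (H3 : cos (3*x) = - cos (2*x)).
  { replace (3*x) with (PI - 2*x) by (unfold x; field). apply cos_pi_minus. }
  replace (3*x) with (2*x + x) in H3 by ring.
  rewrite cos_plus, sin_2a, cos_2a in H3.
  pose proof (sin2_cos2 x) as Hs. unfold Rsqr in Hs.
  assert (Hq : 4*cos x * cos x - 2 * cos x - 1 = 0) by nra.
  pose proof sqrt5_sq. pose proof (sqrt_lt_R0 5 ltac:(lra)).
  assert ((4*cos x - 1 - sqrt 5)*(4*cos x - 1 + sqrt 5) = 0) by nra.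
  unfold tau. destruct (Rmult_integral _ _ H1); nra.
Qed.

Lemma sin_PI5_sq : sin (PI/5) * sin (PI/5) = (3 - tau)/4.
Proof. pose proof (sin2_cos2 (PI/5)). unfold Rsqr in H. rewrite cos_PI5 in H. pose proof tau_sq. nra. Qed.

Lemma tau'_eq : tau' = 1 - tau.
Proof. unfold tau, tau'. field. Qed.

Lemma xi_eq : xi = (tau/2, sin (PI/5)).
Proof. unfold xi. rewrite cos_PI5. reflexivity. Qed.
Ltac cpow_tac := rewrite xi_eq; set (s := sin (PI/5)); pose proof tau_sq; pose proof sin_PI5_sq;
  simpl; unfold Cmult, RtoC; simpl; unfold Rdiv in *;
  assert (Hh : 2 * /2 = 1) by lra; assert (Hh4 : 4 * /4 = 1) by lra; generalize dependent (/2); generalize dependent (/4); intros;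
  f_equal; nsatz.
Lemma xp0 : Cpow xi 0 = (1, 0). Proof. reflexivity. Qed.
Lemma xp1 : Cpow xi 1 = (tau/2, sin (PI/5)). Proof. cpow_tac. Qed.
Lemma xp2 : Cpow xi 2 = ((tau-1)/2, tau * sin (PI/5)). Proof. cpow_tac. Qed.
Lemma xp3 : Cpow xi 3 = ((1-tau)/2, tau * sin (PI/5)). Proof. cpow_tac. Qed.
Lemma xp4 : Cpow xi 4 = (-tau/2, sin (PI/5)). Proof. cpow_tac. Qed.
Lemma xp5 : Cpow xi 5 = (-1, 0). Proof. cpow_tac. Qed.
Lemma xp6 : Cpow xi 6 = (-tau/2, - sin (PI/5)). Proof. cpow_tac. Qed.
Lemma xp7 : Cpow xi 7 = ((1-tau)/2, - tau * sin (PI/5)). Proof. cpow_tac. Qed.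
Lemma xp8 : Cpow xi 8 = ((tau-1)/2, - tau * sin (PI/5)). Proof. cpow_tac. Qed.
Lemma xp9 : Cpow xi 9 = (tau/2, - sin (PI/5)). Proof. cpow_tac. Qed.
From Stdlib Require Import Lia.

Definition ca k : Z := match k with 0=> (1)%Z |1=> (0)%Z|2=> (0)%Z|3=> (1)%Z|4=> (0)%Z|5=> (-1)%Z|6=> (0)%Z|7=> (0)%Z|8=> (-1)%Z|_=> (0)%Z end.
Definition cb k : Z := match k with 0=> (0)%Z |1=> (1)%Z|2=> (1)%Z|3=> (0)%Z|4=> (0)%Z|5=> (0)%Z|6=> (-1)%Z|7=> (-1)%Z|8=> (0)%Z|_=> (0)%Z end.
Definition cc k : Z := match k with 0=> (0)%Z |1=> (1)%Z|2=> (0)%Z|3=> (0)%Z|4=> (1)%Z|5=> (0)%Z|6=> (-1)%Z|7=> (0)%Z|8=> (0)%Z|9=> (-1)%Z|_=> (0)%Z end.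
Definition cd k : Z := match k with 0=> (0)%Z |1=> (0)%Z|2=> (1)%Z|3=> (1)%Z|4=> (0)%Z|5=> (0)%Z|6=> (0)%Z|7=> (-1)%Z|8=> (-1)%Z|_=> (0)%Z end.
Definition perm7 k := match k with 0=>0|1=>7|2=>4|3=>1|4=>8|5=>5|6=>2|7=>9|8=>6|9=>3|_=>0 end%nat.
Definition inv3 k := match k with 0=>0|1=>3|2=>6|3=>9|4=>2|5=>5|6=>8|7=>1|8=>4|9=>7|_=>0 end%nat.

Ltac alg_tac := set (s := sin (PI/5)) in *; pose proof tau_sq;
  unfold Cplus, Cmult, RtoC; simpl; unfold Rdiv in *;
  assert (Hh : 2 * /2 = 1) by lra;
  generalize dependent (/2); intros;
  f_equal; nsatz.

Lemma xi_M k : (k < 10)%nat -> Cpow xi k = Mrep (ca k) (cb k) (cc k) (cd k).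
Proof.
  intros Hk. unfold Mrep. rewrite xp4.
  do 10 (destruct k as [|k]; [cbn [ca cb cc cd];
   first [rewrite xp0|rewrite xp1|rewrite xp2|rewrite xp3|rewrite xp4|rewrite xp5|rewrite xp6|rewrite xp7|rewrite xp8|rewrite xp9]; alg_tac|]).
  lia.
Qed.

Lemma xi_star k : (k < 10)%nat -> Cpow xi (perm7 k) = star_rep (ca k) (cb k) (cc k) (cd k).
Proof.
  intros Hk. unfold star_rep. rewrite xp8, tau'_eq.
  do 10 (destruct k as [|k]; [cbn [ca cb cc cd perm7];
   first [rewrite xp0|rewrite xp1|rewrite xp2|rewrite xp3|rewrite xp4|rewrite xp5|rewrite xp6|rewrite xp7|rewrite xp8|rewrite xp9]; alg_tac|]).
  lia.
Qed.

Definition Zsum10 (f : nat -> Z) : Z := fold_right Z.add 0%Z (map f (seq 0 10)).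

Lemma Csum10_ext f g : (forall j, (j < 10)%nat -> f j = g j) -> Csum10 f = Csum10 g.
Proof. intros H. unfold Csum10. cbn [seq map fold_right]. repeat rewrite H by lia. reflexivity. Qed.

Ltac lin_tac := cbn [seq map fold_right];
  repeat (rewrite plus_IZR || rewrite mult_IZR); repeat rewrite <- INR_IZR_INZ;
  repeat (rewrite RtoC_plus || rewrite RtoC_mult); ring.

Lemma Mrep_lin (f : nat -> nat) a b c d :
  Csum10 (fun j => Cmult (RtoC (INR (f j))) (Mrep (a j) (b j) (c j) (d j))) =
  Mrep (Zsum10 (fun j => Z.of_nat (f j) * a j)%Z) (Zsum10 (fun j => Z.of_nat (f j) * b j)%Z)
       (Zsum10 (fun j => Z.of_nat (f j) * c j)%Z) (Zsum10 (fun j => Z.of_nat (f j) * d j)%Z).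
Proof. unfold Csum10, Zsum10, Mrep. lin_tac. Qed.

Lemma star_lin (f : nat -> nat) a b c d :
  Csum10 (fun j => Cmult (RtoC (INR (f j))) (star_rep (a j) (b j) (c j) (d j))) =
  star_rep (Zsum10 (fun j => Z.of_nat (f j) * a j)%Z) (Zsum10 (fun j => Z.of_nat (f j) * b j)%Z)
       (Zsum10 (fun j => Z.of_nat (f j) * c j)%Z) (Zsum10 (fun j => Z.of_nat (f j) * d j)%Z).
Proof. unfold Csum10, Zsum10, star_rep. lin_tac. Qed.

Lemma sum_xi : Csum10 (Cpow xi) = RtoC 0.
Proof.
  unfold Csum10. cbn [seq map fold_right].
  rewrite xp0, xp1, xp2, xp3, xp4, xp5, xp6, xp7, xp8, xp9.
  unfold Cplus, RtoC; simpl. f_equal; field.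
Qed.

Lemma Csum10_split f g : Csum10 (fun j => Cplus (f j) (g j)) = Cplus (Csum10 f) (Csum10 g).
Proof. unfold Csum10. cbn [seq map fold_right]. ring. Qed.
Lemma Csum10_scal (K : C) f : Csum10 (fun j => Cmult K (f j)) = Cmult K (Csum10 f).
Proof. unfold Csum10. cbn [seq map fold_right]. ring. Qed.

Lemma Q2_Dn (n : nat) (hn : (0 < n)%nat) (nj : nat -> nat) :
  (nsum10 nj <= n)%nat ->
  Dn n (Csum10 (fun j => Cmult (RtoC (INR (nj j))) (Cpow xi j))).
Proof.
  intros HN.
  set (N := nsum10 nj) in *.
  assert (Hn : 0 < INR n) by (apply lt_0_INR; lia).
  assert (HNn : INR N <= INR n) by (apply le_INR; lia).
  assert (HNs : INR N = Rsum10 (fun j => INR (nj j))).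
  { unfold N, nsum10, Rsum10. cbn [seq map fold_right]. repeat rewrite plus_INR. simpl. ring. }
  set (K := (INR n - INR N) / 10).
  exists (fun j => (INR (nj j) + K) / INR n).
  split; [|split].
  - intros j _. apply Rmult_le_pos; [| left; apply Rinv_0_lt_compat; lra].
    pose proof (pos_INR (nj j)). unfold K. lra.
  - unfold Rsum10 in *. cbn [seq map fold_right] in *. unfold K. field_simplify; [|lra].
    rewrite HNs. field. lra.
  - transitivity (Csum10 (fun j => Cplus (Cmult (RtoC (INR (nj j))) (Cpow xi j)) (Cmult (RtoC K) (Cpow xi j)))).
    + rewrite Csum10_split, Csum10_scal, sum_xi. ring.
    + apply Csum10_ext. intros j _.
      replace (RtoC ((INR (nj j) + K) / INR n)) with (Cmult (RtoC (INR (nj j) + K)) (RtoC (/ INR n))).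
      2:{ rewrite <- RtoC_mult. reflexivity. }
      rewrite RtoC_plus.
      assert (E : Cmult (RtoC (/ INR n)) (RtoC (INR n)) = RtoC 1).
      { rewrite <- RtoC_mult. f_equal. field. lra. }
      transitivity (Cmult (Cmult (RtoC (INR (nj j)) + RtoC K) (Cmult (RtoC (/ INR n)) (RtoC (INR n)))) (Cpow xi j)).
      * rewrite E. ring.
      * ring.
Qed.

Theorem lemma6p16 (n : nat) (hn : (0 < n)%nat) (z : C) :
  Q2set n z -> SigmaSet (Dn n) z /\ Dn n z.
Proof.
  intros [nj [HN Hz]]. split.
  2:{ subst z. apply Q2_Dn; auto. }
  exists (Zsum10 (fun j => Z.of_nat (nj j) * ca j)%Z), (Zsum10 (fun j => Z.of_nat (nj j) * cb j)%Z),
         (Zsum10 (fun j => Z.of_nat (nj j) * cc j)%Z), (Zsum10 (fun j => Z.of_nat (nj j) * cd j)%Z).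
  split.
  - rewrite <- Mrep_lin, Hz. apply Csum10_ext. intros j Hj. rewrite xi_M; auto.
  - rewrite <- star_lin.
    rewrite (Csum10_ext _ (fun j => Cmult (RtoC (INR (nj j))) (Cpow xi (perm7 j)))).
    2:{ intros j Hj. rewrite xi_star; auto. }
    replace (Csum10 (fun j => Cmult (RtoC (INR (nj j))) (Cpow xi (perm7 j))))
      with (Csum10 (fun j => Cmult (RtoC (INR (nj (inv3 j)))) (Cpow xi j))).
    + apply Q2_Dn; auto. unfold nsum10 in *. cbn [seq map fold_right inv3] in *. lia.
    + unfold Csum10. cbn [seq map fold_right inv3 perm7]. ring.
Qed.
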